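(* Let $\lambda\ge L_\varphi^2$ and for $t\ge1$ let $\widehat\varphi_{t,s'}=\varphi_{t,s'}-\sum_{s''\in\mathcal S_t}p_{t,s''}(\widehat\theta_{t+1})\varphi_{t,s''}$. Then (1) $\sum_{t=1}^T\max_{s'\in\mathcal S_t}\|\varphi_{t,s'}\|^2_{\Sigma_t^{-1}}\le\frac{2d}{\kappa}\log\big(1+\frac{T\mathcal UL_\varphi^2}{\lambda d}\big)$; (2) $\sum_{t=1}^T\sum_{s'\in\mathcal S_t}p_{t,s'}(\widehat\theta_{t+1})\|\widehat\varphi_{t,s'}\|^2_{\Sigma_t^{-1}}\le2d\log\big(1+\frac{T\mathcal UL_\varphi^2}{\lambda d}\big)$; (3) $\sum_{t=1}^T\max_{s'\in\mathcal S_t}\|\widehat\varphi_{t,s'}\|^2_{\Sigma_t^{-1}}\le\frac{8d}{\kappa}\log\big(1+\frac{T\mathcal UL_\varphi^2}{\lambda d}\big)$.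
   Context: MNL model: finite $\mathcal S,\mathcal A$, reachable sets $\mathcal S_{s,a}$, $\mathcal U=\max|\mathcal S_{s,a}|$, features $\varphi(s,a,s')\in\mathbb R^d$, $p(s'\mid s,a,\theta)=\exp(\varphi(s,a,s')^\top\theta)/\sum_{s''\in\mathcal S_{s,a}}\exp(\varphi(s,a,s'')^\top\theta)$, true $\theta^*$. Along a trajectory $(s_t,a_t)$: $\mathcal S_t=\mathcal S_{s_t,a_t}$, $\varphi_{t,s'}=\varphi(s_t,a_t,s')$, $p_{t,s'}(\theta)=p(s'\mid s_t,a_t,\theta)$. Assumptions: (A1) $\|\varphi\|_2\le L_\varphi$, $\|\theta^*\|_2\le L_\theta$, $\Theta=\{\|\theta\|_2\le L_\theta\}$; (A2) $\inf_{\theta\in\Theta}p_{t,s'}(\theta)p_{t,s''}(\theta)\ge\kappa\in(0,1)$ for all $t\in[T]$, $s',s''\in\mathcal S_t$; (A3) each $\mathcal S_{s,a}$ contains $s'$ with $\varphi(s,a,s')=0$. Estimator: $\ell_t(\theta)=-\sum_{s'\in\mathcal S_t}\mathbf 1\{s_{t+1}=s'\}\log p_{t,s'}(\theta)$; $\widehat\theta_1=0$, $\Sigma_t=\lambda I_d+\sum_{i<t}\nabla^2\ell_i(\widehat\theta_{i+1})$, $\widehat\Sigma_t=\Sigma_t+\eta\nabla^2\ell_t(\widehat\theta_t)$, $\widehat\theta_{t+1}=\arg\min_{\theta\in\Theta}\{\nabla\ell_t(\widehat\theta_t)^\top(\theta-\widehat\theta_t)+\frac1{2\eta}\|\theta-\widehat\theta_t\|^2_{\widehat\Sigma_t}\}$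 ($\eta>0$). *)

(* Defs.v *)
From HB Require Import structures.
From mathcomp Require Import all_boot all_order all_algebra.
From mathcomp Require Import reals.
From mathcomp Require Import sequences.
From mathcomp.analysis Require Import exp.
Set Implicit Arguments. Unset Strict Implicit. Unset Printing Implicit Defensive.
Import Order.TTheory GRing.Theory Num.Theory.
Local Open Scope ring_scope.

Section MNL.
Variable R : realType.
Variables (S A : finType) (d : nat).
Variable Sr : S -> A -> {set S}.
Variable phi : S -> A -> S -> 'cV[R]_d.

Definition dotv (x y : 'cV[R]_d) : R := (x^T *m y) 0 0.
Definition norm2 (x : 'cV[R]_d) : R := Num.sqrt (dotv x x).
Definition wnorm2 (M : 'M[R]_d) (x : 'cV[R]_d) : R := (x^T *m M *m x) 0 0.

Definition Umax : nat := (\max_(s : S) \max_(a : A) #|Sr s a|)%N.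

Definition mnl_prob (s : S) (a : A) (s' : S) (th : 'cV[R]_d) : R :=
  expR (dotv (phi s a s') th) /
  \sum_(s'' in Sr s a) expR (dotv (phi s a s'') th).

Variables (st : nat -> S) (at_ : nat -> A).

Definition St (t : nat) : {set S} := Sr (st t) (at_ t).
Definition phit (t : nat) (s' : S) : 'cV[R]_d := phi (st t) (at_ t) s'.
Definition pt (t : nat) (s' : S) (th : 'cV[R]_d) : R :=
  mnl_prob (st t) (at_ t) s' th.

Definition phibar (t : nat) (th : 'cV[R]_d) : 'cV[R]_d :=
  \sum_(s' in St t) pt t s' th *: phit t s'.

(* gradient of ell_t(theta) = - sum_{s'} 1{s_{t+1}=s'} log p_{t,s'}(theta) *)
Definition grad_loss (t : nat) (th : 'cV[R]_d) : 'cV[R]_d :=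
  phibar t th - phit t (st t.+1).

(* Hessian of ell_t at theta *)
Definition hess_loss (t : nat) (th : 'cV[R]_d) : 'M[R]_d :=
  \sum_(s' in St t) pt t s' th *: (phit t s' *m (phit t s')^T)
  - phibar t th *m (phibar t th)^T.

Variables (lam eta Ltheta : R) (thhat : nat -> 'cV[R]_d).

Definition Sigma (t : nat) : 'M[R]_d :=
  lam%:M + \sum_(1 <= i < t) hess_loss i (thhat i.+1).

Definition Sigmahat (t : nat) : 'M[R]_d :=
  Sigma t + eta *: hess_loss t (thhat t).

Definition omd_obj (t : nat) (th : 'cV[R]_d) : R :=
  dotv (grad_loss t (thhat t)) (th - thhat t)
  + (2 * eta)^-1 * wnorm2 (Sigmahat t) (th - thhat t).

Definition is_omd_seq : Prop :=
  thhat 1%N = 0 /\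
  forall t : nat, (1 <= t)%N ->
    norm2 (thhat t.+1) <= Ltheta /\
    forall th : 'cV[R]_d, norm2 th <= Ltheta -> omd_obj t (thhat t.+1) <= omd_obj t th.

Definition phihat (t : nat) (s' : S) : 'cV[R]_d :=
  phit t s' - \sum_(s'' in St t) pt t s'' (thhat t.+1) *: phit t s''.

End MNL.

(* Main.v *)
Require Import Defs.
From HB Require Import structures.
From mathcomp Require Import all_boot all_order all_algebra.
From mathcomp Require Import reals.
From mathcomp Require Import sequences.
From mathcomp.analysis Require Import exp.
Import Order.TTheory GRing.Theory Num.Theory.
Local Open Scope ring_scope.

From mathcomp Require Import ring lra.
Set Implicit Arguments. Unset Strict Implicit. Unset Printing Implicit Defensive.

Section Lin.
Variables (R : realType) (n : nat).
Implicit Types (M N : 'M[R]_n) (x y u v : 'cV[R]_n).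

Definition bil M x y : R := (x^T *m M *m y) 0 0.

Lemma wnorm2E M x : wnorm2 M x = bil M x x. Proof. by []. Qed.

Lemma bilDl M x y z : bil M (x + y) z = bil M x z + bil M y z.
Proof. by rewrite /bil linearD /= !mulmxDl mxE. Qed.
Lemma bilDr M x y z : bil M z (x + y) = bil M z x + bil M z y.
Proof. by rewrite /bil !mulmxDr mxE. Qed.
Lemma bilZl M a x y : bil M (a *: x) y = a * bil M x y.
Proof. by rewrite /bil linearZ /= -!scalemxAl mxE. Qed.
Lemma bilZr M a x y : bil M x (a *: y) = a * bil M x y.
Proof. by rewrite /bil -!scalemxAr mxE. Qed.
Lemma bilNl M x y : bil M (- x) y = - bil M x y.
Proof. by rewrite -scaleN1r bilZl mulN1r. Qed.
Lemma bilNr M x y : bil M x (- y) = - bil M x y.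
Proof. by rewrite -scaleN1r bilZr mulN1r. Qed.
Lemma bilBl M x y z : bil M (x - y) z = bil M x z - bil M y z.
Proof. by rewrite bilDl bilNl. Qed.
Lemma bilBr M x y z : bil M z (x - y) = bil M z x - bil M z y.
Proof. by rewrite bilDr bilNr. Qed.
Lemma bil0l M y : bil M 0 y = 0.
Proof. by rewrite /bil trmx0 !mul0mx mxE. Qed.
Lemma bil0r M y : bil M y 0 = 0.
Proof. by rewrite /bil !mulmx0 mxE. Qed.
Lemma bil_sym M x y : M^T = M -> bil M x y = bil M y x.
Proof.
move=> sM; rewrite /bil -[in LHS](trmxK (x^T *m M *m y)) mxE.
by rewrite !trmx_mul trmxK sM mulmxA.
Qed.
Lemma bilDM M N x y : bil (M + N) x y = bil M x y + bil N x y.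
Proof. by rewrite /bil mulmxDr mulmxDl mxE. Qed.
Lemma bilZM a M x y : bil (a *: M) x y = a * bil M x y.
Proof. by rewrite /bil -scalemxAr -scalemxAl mxE. Qed.
Lemma bil_sumM I (r : seq I) (P : pred I) (F : I -> 'M_n) x y :
  bil (\sum_(i <- r | P i) F i) x y = \sum_(i <- r | P i) bil (F i) x y.
Proof.
elim/big_rec2: _ => [|i a Mi _ <-]; first by rewrite /bil mulmx0 mul0mx mxE.
by rewrite bilDM.
Qed.
Lemma bil_sumr I (r : seq I) (P : pred I) (F : I -> 'cV_n) M x :
  bil M x (\sum_(i <- r | P i) F i) = \sum_(i <- r | P i) bil M x (F i).
Proof.
elim/big_rec2: _ => [|i a Mi _ <-]; first by rewrite bil0r.
by rewrite bilDr.
Qed.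
Lemma bil_suml I (r : seq I) (P : pred I) (F : I -> 'cV_n) M x :
  bil M (\sum_(i <- r | P i) F i) x = \sum_(i <- r | P i) bil M (F i) x.
Proof.
elim/big_rec2: _ => [|i a Mi _ <-]; first by rewrite bil0l.
by rewrite bilDl.
Qed.
Lemma bil1 x y : bil 1%:M x y = dotv x y.
Proof. by rewrite /bil mulmx1. Qed.
Lemma dotv_sym x y : dotv x y = dotv y x.
Proof. by rewrite -!bil1 bil_sym // trmx1. Qed.
Lemma bil_rank1 u x y : bil (u *m u^T) x y = dotv x u * dotv u y.
Proof.
by rewrite /bil /dotv !mulmxA -mulmxA [in LHS]mxE big_ord1.
Qed.


Definition PD M := M^T = M /\ forall x, x != 0 -> 0 < wnorm2 M x.

Lemma PD_ge0 M x : PD M -> 0 <= wnorm2 M x.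
Proof.
case=> _ pM; have [->|nz] := eqVneq x 0; first by rewrite wnorm2E bil0l.
exact/ltW/pM.
Qed.

Lemma PD_unit M : PD M -> M \in unitmx.
Proof.
case=> sM pM; rewrite -row_free_unit -kermx_eq0; apply/eqP/row_matrixP => i.
rewrite row0; apply/eqP/negPn/negP => nz.
have rM : row i (kermx M) *m M = 0 by rewrite -row_mul mulmx_ker row0.
have := pM (row i (kermx M))^T; rewrite trmx_eq0 => /(_ nz).
by rewrite /wnorm2 trmxK rM mul0mx mxE ltxx.
Qed.

Lemma bil_inv M x u : M \in unitmx -> bil M x (invmx M *m u) = dotv x u.
Proof. by move=> uM; rewrite /bil -mulmxA (mulmxA M) mulmxV // mul1mx. Qed.

Lemma quad_inv M u : M \in unitmx ->
  wnorm2 M (invmx M *m u) = wnorm2 (invmx M) u.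
Proof.
move=> uM; rewrite wnorm2E bil_inv // dotv_sym /dotv /wnorm2.
by rewrite mulmxA.
Qed.

Lemma PD_var M u x : PD M -> 2 * dotv u x - wnorm2 M x <= wnorm2 (invmx M) u.
Proof.
move=> pdM; have uM := PD_unit pdM; have sM := pdM.1.
have := PD_ge0 (x - invmx M *m u) pdM.
rewrite wnorm2E bilBl !bilBr [bil M (invmx M *m u) x](bil_sym _ _ sM) !bil_inv //.
have -> : dotv (invmx M *m u) u = wnorm2 (invmx M) u.
  by rewrite dotv_sym /dotv /wnorm2 mulmxA.
rewrite dotv_sym -wnorm2E => h; lra.
Qed.

Lemma PD_winv_ge0 M u : PD M -> 0 <= wnorm2 (invmx M) u.
Proof.
move=> pdM; have := PD_var u 0 pdM.
have -> : wnorm2 M 0 = 0 by rewrite wnorm2E bil0l.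
by rewrite /dotv mulmx0 mxE mulr0 subr0.
Qed.

Lemma PD_CS M u x : PD M -> dotv u x ^+ 2 <= wnorm2 (invmx M) u * wnorm2 M x.
Proof.
move=> pdM; have [->|nz] := eqVneq x 0.
  have -> : wnorm2 M 0 = 0 by rewrite wnorm2E bil0l.
  by rewrite /dotv mulmx0 mxE expr0n /= mulr0.
have qp := pdM.2 x nz.
set a := dotv u x; set q := wnorm2 M x; set w := wnorm2 (invmx M) u.
have := PD_var u ((a / q) *: x) pdM.
rewrite /dotv -scalemxAr mxE -/(dotv u x) -/a wnorm2E bilZl bilZr -wnorm2E -/q -/w.
have -> : 2 * (a / q * a) - a / q * (a / q * q) = a ^+ 2 / q.
  by field; rewrite gt_eqF.
by rewrite ler_pdivrMr.
Qed.

Lemma PD_mono M N a u : PD M -> PD N -> 0 < a ->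
  (forall x, wnorm2 N x <= a * wnorm2 M x) ->
  wnorm2 (invmx M) u <= a * wnorm2 (invmx N) u.
Proof.
move=> pdM pdN a0 hle; have uM := PD_unit pdM.
set y := invmx M *m u.
have qy : wnorm2 M y = wnorm2 (invmx M) u by exact: quad_inv.
have dy : dotv u y = wnorm2 (invmx M) u by rewrite /dotv /wnorm2 mulmxA.
have h1 := hle (a^-1 *: y). have h2 := PD_var u (a^-1 *: y) pdN.
have e1 : wnorm2 M (a^-1 *: y) = a^-1 * (a^-1 * wnorm2 M y).
  by rewrite !wnorm2E bilZl bilZr.
have e2 : wnorm2 N (a^-1 *: y) = a^-1 * (a^-1 * wnorm2 N y).
  by rewrite !wnorm2E bilZl bilZr.
have e3 : dotv u (a^-1 *: y) = a^-1 * dotv u y by rewrite /dotv -scalemxAr mxE.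
rewrite e1 e2 qy in h1; rewrite e2 e3 dy in h2.
set w := wnorm2 (invmx M) u in h1 h2 *; set v := wnorm2 (invmx N) u in h2 *.
have ab : a * a^-1 = 1 by rewrite divff // gt_eqF.
have E : a * (a^-1 * (a^-1 * w)) = a^-1 * w by rewrite !mulrA ab mul1r.
rewrite E in h1.
have h : a^-1 * w <= v by lra.
by apply: (le_trans _ (ler_wpM2l (ltW a0) h)); rewrite !mulrA ab mul1r.
Qed.

Lemma det1_rank1 (a : 'cV[R]_n) (b : 'rV[R]_n) :
  \det (1%:M + a *m b) = 1 + (b *m a) 0 0.
Proof.
pose P := block_mx (1%:M + a *m b) (- a) 0 (1%:M : 'M[R]_1).
pose Q := block_mx (1%:M : 'M[R]_n) 0 b (1%:M : 'M[R]_1).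
pose L := block_mx (1%:M : 'M[R]_n) 0 b (1%:M : 'M[R]_1).
pose U := block_mx (1%:M : 'M[R]_n) (- a) 0 (1%:M + b *m a : 'M[R]_1).
have PQ : P *m Q = L *m U.
  rewrite /P /Q /L /U !mulmx_block !mulmx1 !mul1mx !mulmx0 !mul0mx !addr0 !add0r.
  by rewrite mulNmx addrK mulmxN (addrC 1%:M) addKr.
have := congr1 determinant PQ.
rewrite !det_mulmx /P /Q /L /U !det_ublock !det_lblock !det1.
by rewrite !mulr1 !mul1r det_mx11 !mxE eqxx mulr1n.
Qed.

Lemma det_rank1 M c u : M \in unitmx ->
  \det (M + c *: (u *m u^T)) = \det M * (1 + c * wnorm2 (invmx M) u).
Proof.
move=> uM.
have -> : M + c *: (u *m u^T) = M *m (1%:M + (invmx M *m u) *m (c *: u^T)).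
  by rewrite mulmxDr mulmx1 !mulmxA mulmxV // mul1mx scalemxAr.
rewrite det_mulmx det1_rank1; congr (_ * (1 + _)).
by rewrite -scalemxAl mxE /wnorm2 mulmxA.
Qed.

Lemma wnorm2_rank1 M c u x :
  wnorm2 (M + c *: (u *m u^T)) x = wnorm2 M x + c * dotv u x ^+ 2.
Proof. by rewrite !wnorm2E bilDM bilZM bil_rank1 dotv_sym expr2. Qed.

Lemma PD_rank1 M c u : PD M -> 0 <= c -> PD (M + c *: (u *m u^T)).
Proof.
move=> [sM pM] c0; split.
  by rewrite linearD /= sM linearZ /= trmx_mul trmxK.
move=> x nz; rewrite wnorm2_rank1; apply: ltr_wpDr; last exact: pM.
by apply: mulr_ge0 => //; rewrite sqr_ge0.
Qed.

Definition upd M (l : seq (R * 'cV[R]_n)) :=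
  M + \sum_(k <- l) k.1 *: (k.2 *m k.2^T).

Lemma upd_potential (l : seq (R * 'cV[R]_n)) M :
  all (fun k => 0 <= k.1) l -> PD M -> 0 < \det M ->
  [/\ PD (upd M l), 0 < \det (upd M l) &
    \det M * (1 + \sum_(k <- l) k.1 * wnorm2 (invmx M) k.2) <= \det (upd M l)].
Proof.
elim: l M => [|[c u] l IH] M /=.
  by move=> _ pM dM; rewrite /upd !big_nil addr0 addr0 mulr1.
move=> /andP[c0 hl] pM dM.
set M1 := M + c *: (u *m u^T).
have pM1 : PD M1 by exact: PD_rank1.
have uM := PD_unit pM.
have w0 : 0 <= wnorm2 (invmx M) u by exact: PD_winv_ge0.
have dM1 : \det M1 = \det M * (1 + c * wnorm2 (invmx M) u) by exact: det_rank1.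
have cw0 : 0 < 1 + c * wnorm2 (invmx M) u.
  by apply: ltr_wpDr; [apply: mulr_ge0|].
have dM1p : 0 < \det M1 by rewrite dM1 mulr_gt0.
have [pN dN hN] := IH M1 hl pM1 dM1p.
have eN : upd M ((c, u) :: l) = upd M1 l by rewrite /upd big_cons addrA.
rewrite eN; split => //.
apply: le_trans hN; rewrite dM1 -mulrA ler_pM2l // big_cons /=.
set a := c * wnorm2 (invmx M) u.
rewrite mulrDr mulr1 addrA lerD2l.
rewrite big_distrr /= !big_seq; apply: ler_sum => -[c' u'] hin /=.
have c'0 : 0 <= c' := allP hl _ hin.
rewrite mulrCA; apply: ler_wpM2l => //.
apply: PD_mono => // x.
rewrite /M1 wnorm2_rank1 -/a /a.
have := PD_CS u x pM; have := PD_ge0 x pM.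
set q := wnorm2 M x; set w := wnorm2 (invmx M) u; set e := dotv u x ^+ 2 => q0 h.
have : c * e <= c * (w * q) by apply: ler_wpM2l.
lra.
Qed.

End Lin.

Section Hadamard.
Variable R : realType.

Lemma wnorm2_sum n (M : 'M[R]_n) x :
  wnorm2 M x = \sum_i \sum_j x i 0 * M i j * x j 0.
Proof.
rewrite /wnorm2 mxE (exchange_big) /=; apply: eq_bigr => j _.
rewrite mxE big_distrl /=; apply: eq_bigr => i _; by rewrite !mxE.
Qed.

Lemma wnorm2_delta n (M : 'M[R]_n) i : wnorm2 M (delta_mx i 0) = M i i.
Proof. by rewrite /wnorm2 trmx_delta -rowE -colE !mxE. Qed.

Lemma dotv_delta n (i : 'I_n) : dotv (delta_mx i 0 : 'cV[R]_n) (delta_mx i 0) = 1.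
Proof. by rewrite /dotv trmx_delta mul_delta_mx mxE !eqxx. Qed.

Lemma PD_minor n (M : 'M[R]_n.+1) : PD M -> PD (row' ord0 (col' ord0 M)).
Proof.
case=> sM pM; split.
  apply/matrixP => i j; rewrite !mxE.
  by rewrite -[M (lift _ i) _](congr1 (fun A : 'M_n.+1 => A (lift ord0 i) (lift ord0 j)) sM) mxE.
move=> x nz.
pose y : 'cV[R]_n.+1 := \col_i (if unlift ord0 i is Some j then x j 0 else 0).
have y0 : y ord0 0 = 0 by rewrite mxE unlift_none.
have yl j : y (lift ord0 j) 0 = x j 0 by rewrite mxE liftK.
have ynz : y != 0.
  apply: contraNneq nz => y0'; apply/eqP/matrixP => i j; rewrite (ord1 j) -yl y0' !mxE.
  done.
have := pM y ynz; rewrite !wnorm2_sum => h; apply: lt_le_trans h _.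
rewrite le_eqVlt; apply/orP; left; apply/eqP.
rewrite big_ord_recl y0 big1 ?add0r; last by move=> j _; rewrite !mul0r.
apply: eq_bigr => i _; rewrite big_ord_recl y0 mulr0 add0r.
by apply: eq_bigr => j _; rewrite !yl !mxE.
Qed.

Lemma hadamard n (M : 'M[R]_n) : PD M -> 0 < \det M /\ \det M <= \prod_i M i i.
Proof.
elim: n M => [|n IH] M pM.
  by rewrite det_mx00 big_ord0.
have uM := PD_unit pM.
have [pm1 pm2] := IH _ (PD_minor pM).
set m := row' ord0 (col' ord0 M) in pm1 pm2.
set e : 'cV[R]_n.+1 := delta_mx ord0 0.
have enz : e != 0.
  apply/negP => /eqP /matrixP /(_ ord0 0); rewrite !mxE !eqxx /=.
  by move/eqP; rewrite oner_eq0.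
have M00 : 0 < M ord0 ord0 by rewrite -wnorm2_delta; exact: pM.2.
have cs := PD_CS e e pM.
rewrite dotv_delta expr1n !wnorm2_delta in cs.
have iE : (invmx M) ord0 ord0 = (\det M)^-1 * \det m.
  rewrite /invmx uM !mxE /cofactor /= expr0 mul1r.
  done.
rewrite iE in cs.
have dnz : \det M != 0 by rewrite -unitfE -unitmxE.
have Dp : 0 < \det M.
  have h1 : 0 < (\det M)^-1 * \det m.
    by rewrite -(pmulr_lgt0 _ M00); apply: lt_le_trans ltr01 cs.
  by move: h1; rewrite pmulr_lgt0 // invr_gt0.
split => //.
rewrite big_ord_recl.
have : \det M <= \det m * M ord0 ord0.
  apply: (le_trans (_ : _ <= \det M * ((\det M)^-1 * \det m * M ord0 ord0))).
    by rewrite -{1}[\det M]mulr1; apply: ler_wpM2l => //; exact: ltW.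
  by rewrite !mulrA mulfV // mul1r.
move=> h; apply: le_trans h _; rewrite mulrC; apply: ler_wpM2l; first exact: ltW.
apply: le_trans pm2 _; rewrite le_eqVlt; apply/orP; left; apply/eqP.
by apply: eq_bigr => i _; rewrite !mxE.
Qed.

End Hadamard.

Section Weighted.
Variables (R : realType) (n : nat) (I : finType) (A : {pred I}).
Variables (w : I -> R) (f : I -> 'cV[R]_n).
Hypothesis hw : \sum_(i in A) w i = 1.
Let fb := \sum_(i in A) w i *: f i.

Lemma wsum_bil_l M y : \sum_(i in A) w i * bil M (f i) y = bil M fb y.
Proof. by rewrite /fb bil_suml; apply: eq_bigr => i _; rewrite bilZl. Qed.

Lemma wsum_bil_r M y : \sum_(i in A) w i * bil M y (f i) = bil M y fb.
Proof. by rewrite /fb bil_sumr; apply: eq_bigr => i _; rewrite bilZr. Qed.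

Lemma wvar_bil M : M^T = M ->
  \sum_(i in A) w i * bil M (f i - fb) (f i - fb) =
  \sum_(i in A) w i * bil M (f i) (f i) - bil M fb fb.
Proof.
move=> sM.
rewrite (eq_bigr (fun i => w i * bil M (f i) (f i) - 2 * (w i * bil M (f i) fb)
   + w i * bil M fb fb)); last first.
  by move=> i _; rewrite bilBl !bilBr (bil_sym fb (f i) sM); ring.
rewrite big_split /= sumrB -big_distrr /= -big_distrl /= hw mul1r wsum_bil_l.
ring.
Qed.

Lemma wpair_bil M : M^T = M ->
  \sum_(i in A) \sum_(j in A) w i * w j * bil M (f i - f j) (f i - f j) =
  2 * (\sum_(i in A) w i * bil M (f i) (f i) - bil M fb fb).
Proof.
move=> sM.
have inner i : \sum_(j in A) w i * w j * bil M (f i - f j) (f i - f j) =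
  w i * bil M (f i) (f i) - 2 * (w i * bil M (f i) fb) +
  w i * \sum_(j in A) w j * bil M (f j) (f j).
  rewrite (eq_bigr (fun j => w i * bil M (f i) (f i) * w j
     - 2 * (w i * (w j * bil M (f i) (f j))) + w i * (w j * bil M (f j) (f j))));
    last by move=> j _; rewrite bilBl !bilBr (bil_sym (f j) (f i) sM); ring.
  rewrite big_split /= sumrB -big_distrr /= hw mulr1 -!big_distrr /=.
  by rewrite wsum_bil_r.
rewrite (eq_bigr _ (fun i _ => inner i)) big_split /= sumrB -big_distrr /=.
rewrite -big_distrl /= hw mul1r wsum_bil_l.
set S := \sum_(i in A) w i * bil M (f i) (f i).

ring.
Qed.

Lemma wvar_mx :
  \sum_(i in A) w i *: (f i *m (f i)^T) - fb *m fb^T =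
  \sum_(i in A) w i *: ((f i - fb) *m (f i - fb)^T).
Proof.
have e i : w i *: ((f i - fb) *m (f i - fb)^T) =
   w i *: (f i *m (f i)^T) - w i *: (f i *m fb^T) - w i *: (fb *m (f i)^T)
   + w i *: (fb *m fb^T).
  rewrite linearB /= mulmxBl !mulmxBr !scalerDr !scalerN.
  by rewrite scalerBr opprB addrA addrAC.
rewrite (eq_bigr _ (fun i _ => e i)).
have e1 : \sum_(i in A) w i *: (f i *m fb^T) = fb *m fb^T.
  by rewrite /fb mulmx_suml; apply: eq_bigr => i _; rewrite scalemxAl.
have e2 : \sum_(i in A) w i *: (fb *m (f i)^T) = fb *m fb^T.
  rewrite /fb [in RHS]linear_sum /= mulmx_sumr; apply: eq_bigr => i _.
  by rewrite linearZ /= scalemxAr.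
rewrite big_split /= !sumrB -scaler_suml hw scale1r e1 e2.
by rewrite subrK.
Qed.

End Weighted.

Section Misc.
Variables (R : realType) (n : nat).

Lemma mul_self_ge0 (a : R) : 0 <= a * a.
Proof. by rewrite -expr2 sqr_ge0. Qed.

Lemma dotv_sum (x : 'cV[R]_n) : dotv x x = \sum_i x i 0 * x i 0.
Proof. by rewrite /dotv mxE; apply: eq_bigr => i _; rewrite mxE. Qed.

Lemma dotv_ge0 (x : 'cV[R]_n) : 0 <= dotv x x.
Proof. by rewrite dotv_sum; apply: sumr_ge0 => i _; rewrite mul_self_ge0. Qed.


Lemma dotv_eq0 (x : 'cV[R]_n) : dotv x x = 0 -> x = 0.
Proof.
rewrite dotv_sum => h.
have h' := psumr_eq0P (fun i _ => mul_self_ge0 (x i 0)) h.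
apply/matrixP => i j; rewrite (ord1 j) mxE.
by have /eqP := h' i isT; rewrite mulf_eq0 orbb => /eqP.
Qed.

Lemma dotv_gt0 (x : 'cV[R]_n) : x != 0 -> 0 < dotv x x.
Proof.
move=> nz; rewrite lt_def dotv_ge0 andbT; apply: contra nz => /eqP h.
by apply/eqP; exact: dotv_eq0.
Qed.

Lemma wnorm2_scalar (a : R) (x : 'cV[R]_n) : wnorm2 a%:M x = a * dotv x x.
Proof. by rewrite /wnorm2 mul_mx_scalar -scalemxAl mxE. Qed.

Lemma PD_scalar (a : R) : 0 < a -> PD (a%:M : 'M[R]_n).
Proof.
move=> a0; split; first by rewrite tr_scalar_mx.
by move=> x nz; rewrite wnorm2_scalar mulr_gt0 // dotv_gt0.
Qed.

Lemma wnorm2_upd (M : 'M[R]_n) l x :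
  wnorm2 (upd M l) x = wnorm2 M x + \sum_(k <- l) k.1 * dotv k.2 x ^+ 2.
Proof.
rewrite /upd !wnorm2E bilDM bil_sumM; congr (_ + _); apply: eq_bigr => k _.
by rewrite bilZM bil_rank1 dotv_sym expr2.
Qed.

Lemma wnorm2_upd_ge (M : 'M[R]_n) l x :
  all (fun k => 0 <= k.1) l -> wnorm2 M x <= wnorm2 (upd M l) x.
Proof.
move=> hl; rewrite wnorm2_upd lerDl big_seq; apply: sumr_ge0 => k kl.
by apply: mulr_ge0; [exact: (allP hl) | exact: sqr_ge0].
Qed.

Lemma trace_rank1 (c : R) (u : 'cV[R]_n) : \tr (c *: (u *m u^T)) = c * dotv u u.
Proof. by rewrite mxtraceZ mxtrace_mulC /mxtrace big_ord1. Qed.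

End Misc.

Section Logs.
Variable R : realType.

Lemma ln_prod n (x : 'I_n -> R) : (forall i, 0 < x i) ->
  ln (\prod_i x i) = \sum_i ln (x i).
Proof.
move=> xp.
suff [] : 0 < \prod_i x i /\ ln (\prod_i x i) = \sum_i ln (x i) by [].
elim/big_rec2: _ => [|i a b _ [bp IH]]; first by rewrite ltr01 ln1.
split; first by rewrite mulr_gt0.
by rewrite lnM ?posrE // IH.
Qed.

Lemma ln_le_lin (x m : R) : 0 < x -> 0 < m -> ln x <= ln m + x / m - 1.
Proof.
move=> x0 m0.
have h := @le_ln1Dx R (x / m - 1).
have : -1 < x / m - 1 by have := divr_gt0 x0 m0; lra.
move/h; rewrite addrC subrK ln_div ?posrE //.
by move=> h2; rewrite -addrA -lerBlDl.
Qed.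

Lemma sum_ln_le n (x : 'I_n -> R) (m : R) : 0 < m -> (forall i, 0 < x i) ->
  ((0 < n)%N -> \sum_i x i <= n%:R * m) -> \sum_i ln (x i) <= n%:R * ln m.
Proof.
case: n x => [|n] x m0 xp hs; first by rewrite big_ord0 mul0r.
have hs' := hs isT.
apply: le_trans (_ : \sum_(i < n.+1) (ln m + x i / m - 1) <= _).
  by apply: ler_sum => i _; exact: ln_le_lin.
have h : \sum_i x i / m <= n.+1%:R by rewrite -mulr_suml ler_pdivrMr // mulrC.
rewrite sumrB big_split /= !sumr_const card_ord -(mulr_natl (ln m)).
lra.
Qed.

Lemma ln1D_ge (x : R) : 0 <= x <= 1 -> x <= 2 * ln (1 + x).
Proof.
case/andP=> x0 x1.
have p : 0 < 1 + x by lra.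
have h := @le_ln1Dx R ((1 + x)^-1 - 1).
have ip : 0 < (1 + x)^-1 by rewrite invr_gt0.
have : -1 < (1 + x)^-1 - 1 by lra.
move/h; rewrite addrC subrK lnV ?posrE // => h2.
have : x / (1 + x) <= ln (1 + x).
  have -> : x / (1 + x) = 1 - (1 + x)^-1 by field; rewrite gt_eqF.
  lra.
have : x / 2 <= x / (1 + x).
  by apply: ler_wpM2l => //; rewrite lef_pV2 ?posrE //; lra.
lra.
Qed.

End Logs.

Section Model.
Variables (R : realType) (S A : finType) (d : nat).
Variables (Sr : S -> A -> {set S}) (phi : S -> A -> S -> 'cV[R]_d).
Variables (st : nat -> S) (at_ : nat -> A) (lam Lphi : R) (thhat : nat -> 'cV[R]_d).
Hypothesis htraj : forall t : nat, st t.+1 \in St Sr st at_ t.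
Hypothesis hphi : forall s a s', norm2 (phi s a s') <= Lphi.
Hypothesis hlam : 0 < lam.
Hypothesis hL : Lphi ^+ 2 <= lam.

Local Notation Stt t := (St Sr st at_ t).
Local Notation p t s := (pt Sr phi st at_ t s (thhat t.+1)).
Local Notation ph t s := (phit phi st at_ t s).
Local Notation pb t := (phibar Sr phi st at_ t (thhat t.+1)).
Local Notation Sig t := (Sigma Sr phi st at_ lam thhat t).
Definition Wt t := \sum_(s in Stt t) p t s * wnorm2 (invmx (Sig t)) (ph t s - pb t).
Definition ltseq t := [seq (p t s, ph t s - pb t) | s <- enum (Stt t)].

Lemma psum t th : \sum_(s in Stt t) pt Sr phi st at_ t s th = 1.
Proof.
rewrite /pt /mnl_prob -big_distrl /= -/(St Sr st at_ t) mulfV //.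
rewrite gt_eqF // (bigD1 (st t.+1)) //= ltr_pwDl ?expR_gt0 //.
by apply: sumr_ge0 => i _; exact: expR_ge0.
Qed.

Lemma p_ge0 t s th : 0 <= pt Sr phi st at_ t s th.
Proof.
rewrite /pt /mnl_prob divr_ge0 ?expR_ge0 //.
by apply: sumr_ge0 => i _; exact: expR_ge0.
Qed.

Lemma p_le1 t s th : s \in Stt t -> pt Sr phi st at_ t s th <= 1.
Proof.
move=> sin; rewrite -(psum t th) (bigD1 s) //= lerDl.
by apply: sumr_ge0 => i _; exact: p_ge0.
Qed.

Lemma lt_ge0 t : all (fun k => 0 <= k.1) (ltseq t).
Proof. by apply/allP => k /mapP [s _ ->] /=; exact: p_ge0. Qed.

Lemma Sig1 : Sig 1 = lam%:M.
Proof. by rewrite /Sigma big_geq // addr0. Qed.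

Lemma SigS t : (1 <= t)%N ->
  Sig t.+1 = Sig t + hess_loss Sr phi st at_ t (thhat t.+1).
Proof. by move=> t1; rewrite /Sigma big_nat_recr //= addrA. Qed.

Lemma Sig_upd t : (1 <= t)%N -> Sig t.+1 = upd (Sig t) (ltseq t).
Proof.
move=> t1; rewrite SigS // /upd /ltseq big_map big_enum /=; congr (_ + _).
by rewrite /hess_loss wvar_mx //; exact: psum.
Qed.

Lemma W_lt t : Wt t = \sum_(k <- ltseq t) k.1 * wnorm2 (invmx (Sig t)) k.2.
Proof. by rewrite /Wt /ltseq big_map big_enum. Qed.

Lemma Sig_inv t : (1 <= t)%N ->
  [/\ PD (Sig t), 0 < \det (Sig t) & forall x, lam * dotv x x <= wnorm2 (Sig t) x].
Proof.
elim: t => // t IH t1.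
case: (posnP t) => [t0|tp].
  subst t; rewrite Sig1; split; first exact: PD_scalar.
    by rewrite det_scalar exprn_gt0.
  by move=> x; rewrite wnorm2_scalar.
have [pS dS lS] := IH tp.
rewrite Sig_upd //.
have [pN dN _] := upd_potential (lt_ge0 t) pS dS.
split => // x; apply: le_trans (lS x) _; exact: wnorm2_upd_ge (lt_ge0 t).
Qed.

Lemma W_step t : (1 <= t)%N -> \det (Sig t) * (1 + Wt t) <= \det (Sig t.+1).
Proof.
move=> t1; have [pS dS _] := Sig_inv t1.
have [_ _ h] := upd_potential (lt_ge0 t) pS dS.
by rewrite Sig_upd // W_lt.
Qed.

Lemma W_ge0 t : (1 <= t)%N -> 0 <= Wt t.
Proof.
move=> t1; have [pS _ _] := Sig_inv t1.
apply: sumr_ge0 => s _; apply: mulr_ge0; first exact: p_ge0.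
exact: PD_winv_ge0.
Qed.

Lemma dot_phi_le s a s' : dotv (phi s a s') (phi s a s') <= Lphi ^+ 2.
Proof.
have := hphi s a s'; rewrite /norm2.
have h0 := dotv_ge0 (phi s a s').
have r0 := sqrtr_ge0 (dotv (phi s a s') (phi s a s')).
have e := sqr_sqrtr h0.
set r := Num.sqrt _ in r0 e *; move=> h; rewrite -e; nra.
Qed.

Lemma winv_le t v : (1 <= t)%N ->
  wnorm2 (invmx (Sig t)) v <= lam^-1 * dotv v v.
Proof.
move=> t1; have [pS _ lS] := Sig_inv t1.
have := PD_mono v pS (@PD_scalar R d lam hlam) ltr01.
rewrite invmx_scalar wnorm2_scalar mul1r; apply => x; rewrite mul1r wnorm2_scalar.
exact: lS.
Qed.

Lemma W_var t M : M^T = M ->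
  \sum_(s in Stt t) p t s * wnorm2 M (ph t s - pb t) =
  \sum_(s in Stt t) p t s * wnorm2 M (ph t s) - wnorm2 M (pb t).
Proof. by move=> sM; rewrite /wnorm2 (wvar_bil (fun s => ph t s) (psum t (thhat t.+1)) sM). Qed.

Lemma W_le1 t : (1 <= t)%N -> Wt t <= 1.
Proof.
move=> t1; have [pS _ _] := Sig_inv t1.
have sM : (invmx (Sig t))^T = invmx (Sig t) by rewrite trmx_inv pS.1.
rewrite /Wt W_var //.
have h0 := PD_winv_ge0 (pb t) pS.
apply: le_trans (_ : \sum_(s in Stt t) p t s * (lam^-1 * Lphi ^+ 2) <= 1).
  apply: le_trans (_ : \sum_(s in Stt t) p t s * wnorm2 (invmx (Sig t)) (ph t s) <= _).
    by rewrite lerBlDr lerDl.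
  apply: ler_sum => s _; apply: ler_wpM2l; first exact: p_ge0.
  apply: le_trans (winv_le _ t1) _; apply: ler_wpM2l; first by rewrite invr_ge0 ltW.
  exact: dot_phi_le.
rewrite -big_distrl /= psum mul1r ler_pdivrMl // mulr1 //.
Qed.

Lemma tr_upd n (M : 'M[R]_n) l :
  \tr (upd M l) = \tr M + \sum_(k <- l) k.1 * dotv k.2 k.2.
Proof.
rewrite /upd mxtraceD linear_sum /=; congr (_ + _); apply: eq_bigr => k _.
exact: trace_rank1.
Qed.

Lemma tr_Sig t : \tr (Sig t.+1) <= d%:R * lam + t%:R * Lphi ^+ 2.
Proof.
elim: t => [|t IH].
  by rewrite Sig1 mxtrace_scalar mul0r addr0 mulr_natl.
rewrite Sig_upd // tr_upd /ltseq big_map big_enum /=.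
have -> : \sum_(s in Stt t.+1) p t.+1 s * dotv (ph t.+1 s - pb t.+1) (ph t.+1 s - pb t.+1)
   = \sum_(s in Stt t.+1) p t.+1 s * dotv (ph t.+1 s) (ph t.+1 s)
     - dotv (pb t.+1) (pb t.+1).
  have e x : wnorm2 1%:M x = dotv x x by rewrite wnorm2E bil1.
  transitivity (\sum_(s in Stt t.+1) p t.+1 s * wnorm2 1%:M (ph t.+1 s - pb t.+1)).
    by apply: eq_bigr => s _; rewrite e.
  rewrite W_var ?trmx1 // e; congr (_ - _); apply: eq_bigr => s _; by rewrite e.
have h1 := dotv_ge0 (pb t.+1).
have h2 : \sum_(s in Stt t.+1) p t.+1 s * dotv (ph t.+1 s) (ph t.+1 s) <= Lphi ^+ 2.
  apply: le_trans (_ : \sum_(s in Stt t.+1) p t.+1 s * Lphi ^+ 2 <= _).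
    apply: ler_sum => s _; apply: ler_wpM2l; first exact: p_ge0.
    exact: dot_phi_le.
  by rewrite -big_distrl /= psum mul1r.
have eS : (t.+1)%:R = t%:R + 1 :> R by rewrite -addn1 natrD.
rewrite eS; lra.
Qed.

Lemma tele T : \sum_(1 <= t < T.+1) ln (1 + Wt t) <=
  ln (\det (Sig T.+1)) - ln (\det (Sig 1)).
Proof.
elim: T => [|T IH]; first by rewrite big_geq // subrr.
rewrite big_nat_recr //=.
have t1 : (1 <= T.+1)%N by [].
have [_ dS _] := Sig_inv t1.
have [_ dS' _] := Sig_inv (leqW t1).
have W0 := W_ge0 t1.
have hs := W_step t1.
have : ln (\det (Sig T.+1) * (1 + Wt T.+1)) <= ln (\det (Sig T.+2)).
  by rewrite ler_ln ?posrE // mulr_gt0 // ltr_pwDl.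
rewrite lnM ?posrE //; last by rewrite ltr_pwDl.
lra.
Qed.

Lemma Umax_ge1 : (1 <= Umax Sr)%N.
Proof.
have h : (0 < #|Sr (st 1) (at_ 1)|)%N by apply/card_gt0P; exists (st 2); exact: htraj.
apply: leq_trans h _; rewrite /Umax.
apply: leq_trans (leq_bigmax (F := fun s => \max_(a : A) #|Sr s a|) (st 1)).
exact: (leq_bigmax (F := fun a => #|Sr (st 1) a|) (at_ 1)).
Qed.

Lemma logdet_bound T :
  ln (\det (Sig T.+1)) - ln (\det (Sig 1)) <=
  d%:R * ln (1 + T%:R * (Umax Sr)%:R * Lphi ^+ 2 / (lam * d%:R)).
Proof.
set K := T%:R * (Umax Sr)%:R * Lphi ^+ 2.
have [pS dS _] := Sig_inv (ltn0Sn T).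
have [_ hd] := hadamard pS.
have diag_pos i : 0 < Sig T.+1 i i.
  rewrite -wnorm2_delta; apply: pS.2.
  apply/negP => /eqP /matrixP /(_ i 0); rewrite !mxE !eqxx /=.
  by move/eqP; rewrite oner_eq0.
have K0 : 0 <= K by rewrite /K mulr_ge0 // ?sqr_ge0 // mulr_ge0.
have q0 : 0 <= K / (lam * d%:R) by rewrite divr_ge0 // mulr_ge0 // ltW.
set m := lam * (1 + K / (lam * d%:R)).
have q1 : 0 < 1 + K / (lam * d%:R) by rewrite ltr_pwDl.
have m0 : 0 < m by rewrite mulr_gt0.
have h1 : ln (\det (Sig T.+1)) <= \sum_i ln (Sig T.+1 i i).
  rewrite -ln_prod //; rewrite ler_ln ?posrE //.
  by apply: prodr_gt0 => i _.
have h2 : \sum_i ln (Sig T.+1 i i) <= d%:R * ln m.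
  apply: sum_ln_le => // dpos.
  have -> : \sum_i Sig T.+1 i i = \tr (Sig T.+1) by [].
  apply: le_trans (tr_Sig T) _.
  have -> : d%:R * m = d%:R * lam + K.
    by rewrite /m; field; rewrite pnatr_eq0 -lt0n dpos /= gt_eqF.

  rewrite lerD2l /K.
  have hU : 1 <= (Umax Sr)%:R :> R by rewrite ler1n Umax_ge1.
  have hT : 0 <= T%:R * Lphi ^+ 2 :> R by rewrite mulr_ge0 // sqr_ge0.
  have -> : T%:R * (Umax Sr)%:R * Lphi ^+ 2 = (T%:R * Lphi ^+ 2) * (Umax Sr)%:R :> R by ring.
  nra.
have e1 : ln (\det (Sig 1)) = d%:R * ln lam.
  by rewrite Sig1 det_scalar lnXn // mulr_natl.
have e2 : ln m = ln lam + ln (1 + K / (lam * d%:R)) by rewrite lnM ?posrE.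
rewrite e1; rewrite e2 in h2; lra.
Qed.

Lemma sumW T :
  \sum_(1 <= t < T.+1) Wt t <=
  2 * (d%:R * ln (1 + T%:R * (Umax Sr)%:R * Lphi ^+ 2 / (lam * d%:R))).
Proof.
apply: le_trans (_ : \sum_(1 <= t < T.+1) 2 * ln (1 + Wt t) <= _).
  apply: ler_sum_nat => t /andP[t1 _]; apply: ln1D_ge.
  by rewrite W_ge0 // W_le1.
rewrite -mulr_sumr ler_pM2l //.
exact: le_trans (tele T) (logdet_bound T).
Qed.

Lemma pair_ge (B : {set S}) (g : S -> S -> R) s0 :
  s0 \in B -> g s0 s0 = 0 -> (forall s s', 0 <= g s s') ->
  \sum_(s in B) g s s0 + \sum_(s' in B) g s0 s' <=
  \sum_(s in B) \sum_(s' in B) g s s'.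
Proof.
move=> hs0 g00 g0.
rewrite [X in _ <= X](bigD1 s0) //= [X in X + _ <= _](bigD1 s0) //= g00 add0r.
rewrite [X in X <= _]addrC lerD2l; apply: ler_sum => s _.
by rewrite (bigD1 s0) //= lerDl; apply: sumr_ge0 => i _.
Qed.

Lemma term_le (B : {set S}) (F : S -> R) s :
  s \in B -> (forall s, 0 <= F s) -> F s <= \sum_(s' in B) F s'.
Proof.
by move=> hs F0; rewrite (bigD1 s) //= lerDl; apply: sumr_ge0 => i _.
Qed.

Lemma Q_le t kappa : (1 <= t)%N -> 0 < kappa ->
  (forall s s', s \in Stt t -> s' \in Stt t -> kappa <= p t s * p t s') ->
  (exists2 s0, s0 \in Stt t & ph t s0 = 0) ->
  kappa * \sum_(s in Stt t) wnorm2 (invmx (Sig t)) (ph t s) <= Wt t.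
Proof.
move=> t1 k0 hk [s0 hs0 e0].
have [pS _ _] := Sig_inv t1.
set M := invmx (Sig t).
have sM : M^T = M by rewrite /M trmx_inv pS.1.
have q0 x : 0 <= wnorm2 M x by exact: PD_winv_ge0.
have hp := wpair_bil (fun s => ph t s) (psum t (thhat t.+1)) sM.
rewrite /Wt W_var //.
set g := fun s s' => bil M (ph t s - ph t s') (ph t s - ph t s').
have hp' : \sum_(s in Stt t) \sum_(s' in Stt t) p t s * p t s' * g s s' =
  2 * (\sum_(s in Stt t) p t s * wnorm2 M (ph t s) - wnorm2 M (pb t)) by exact: hp.
have g0 s s' : 0 <= g s s' by exact: q0.
have h1 : \sum_(s in Stt t) g s s0 + \sum_(s' in Stt t) g s0 s' <=
       \sum_(s in Stt t) \sum_(s' in Stt t) g s s'.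
  by apply: pair_ge => //; rewrite /g subrr bil0l.
have e1 : \sum_(s in Stt t) g s s0 = \sum_(s in Stt t) wnorm2 M (ph t s).
  by apply: eq_bigr => s _; rewrite /g e0 subr0.
have e2 : \sum_(s' in Stt t) g s0 s' = \sum_(s in Stt t) wnorm2 M (ph t s).
  by apply: eq_bigr => s _; rewrite /g e0 sub0r bilNl bilNr opprK.
rewrite e1 e2 in h1.
have h2 : kappa * \sum_(s in Stt t) \sum_(s' in Stt t) g s s' <=
   \sum_(s in Stt t) \sum_(s' in Stt t) p t s * p t s' * g s s'.
  rewrite mulr_sumr; apply: ler_sum => s hs; rewrite mulr_sumr.
  apply: ler_sum => s' hs'; apply: ler_wpM2r => //; exact: hk.
move: h1 h2 hp'.
set Q := \sum_(s in Stt t) wnorm2 M (ph t s).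
set G := \sum_(s in Stt t) \sum_(s' in Stt t) g s s'.
set P := \sum_(s in Stt t) \sum_(s' in Stt t) p t s * p t s' * g s s'.
move=> h1 h2 hp'; rewrite -/M -/Q.
have : kappa * (Q + Q) <= kappa * G by apply: ler_wpM2l => //; exact: ltW.
lra.
Qed.

Lemma bil_sub_le n (M : 'M[R]_n) a b : M^T = M -> 0 <= bil M (a + b) (a + b) ->
  bil M (a - b) (a - b) <= 2 * bil M a a + 2 * bil M b b.
Proof.
move=> sM; rewrite !bilDl !bilDr !bilNl !bilNr (bil_sym b a sM); lra.
Qed.

Lemma max1_le t kappa : (1 <= t)%N -> 0 < kappa ->
  (forall s s', s \in Stt t -> s' \in Stt t -> kappa <= p t s * p t s') ->
  (exists2 s0, s0 \in Stt t & ph t s0 = 0) ->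
  \big[Num.max/0]_(s in Stt t) wnorm2 (invmx (Sig t)) (ph t s) <= Wt t / kappa.
Proof.
move=> t1 k0 hk h0.
have [pS _ _] := Sig_inv t1.
have hQ := Q_le t1 k0 hk h0.
have q0 x : 0 <= wnorm2 (invmx (Sig t)) x by exact: PD_winv_ge0.
have hQ' : \sum_(s in Stt t) wnorm2 (invmx (Sig t)) (ph t s) <= Wt t / kappa.
  by rewrite ler_pdivlMr // mulrC.
apply: bigmax_le => [|s hs].
  by apply: le_trans hQ'; apply: sumr_ge0.
apply: le_trans hQ'; exact: (term_le (F := fun s => wnorm2 (invmx (Sig t)) (ph t s))).
Qed.

Lemma max3_le t kappa : (1 <= t)%N -> 0 < kappa ->
  (forall s s', s \in Stt t -> s' \in Stt t -> kappa <= p t s * p t s') ->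
  (exists2 s0, s0 \in Stt t & ph t s0 = 0) ->
  \big[Num.max/0]_(s in Stt t) wnorm2 (invmx (Sig t)) (phihat Sr phi st at_ thhat t s)
    <= 4 * (Wt t / kappa).
Proof.
move=> t1 k0 hk h0.
have [pS _ _] := Sig_inv t1.
set M := invmx (Sig t).
have sM : M^T = M by rewrite /M trmx_inv pS.1.
have q0 x : 0 <= wnorm2 M x by exact: PD_winv_ge0.
have hQ := Q_le t1 k0 hk h0.
set Q := \sum_(s in Stt t) wnorm2 M (ph t s) in hQ.
have hQ' : Q <= Wt t / kappa by rewrite ler_pdivlMr // mulrC.
have hb : wnorm2 M (pb t) <= Q.
  have := W_var t sM.
  have : 0 <= \sum_(s in Stt t) p t s * wnorm2 M (ph t s - pb t).
    by apply: sumr_ge0 => s _; apply: mulr_ge0; [exact: p_ge0|].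
  have : \sum_(s in Stt t) p t s * wnorm2 M (ph t s) <= Q.
    apply: ler_sum => s hs; rewrite -[X in _ <= X]mul1r; apply: ler_wpM2r => //.
    exact: p_le1.
  lra.
apply: bigmax_le => [|s hs].
  by apply: mulr_ge0 => //; apply: le_trans hQ'; apply: sumr_ge0.
have hs' : wnorm2 M (ph t s) <= Q.
  exact: (term_le (F := fun s => wnorm2 M (ph t s))).
have := @bil_sub_le d M (ph t s) (pb t) sM (q0 _).
rewrite -!wnorm2E => h.
have e : phihat Sr phi st at_ thhat t s = ph t s - pb t by [].
rewrite e; lra.
Qed.

End Model.






Unset Implicit Arguments.

Theorem lemma27 (R : realType) (S A : finType) (d : nat)
  (Sr : S -> A -> {set S}) (phi : S -> A -> S -> 'cV[R]_d)
  (Lphi Ltheta kappa lam eta : R) (theta_star : 'cV[R]_d)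
  (st : nat -> S) (at_ : nat -> A) (thhat : nat -> 'cV[R]_d) (T : nat)
  (* (A1) *)
  (hphi : forall s a s', norm2 (phi s a s') <= Lphi)
  (htheta : norm2 theta_star <= Ltheta)
  (* (A2) *)
  (hkappa : 0 < kappa < 1)
  (hA2 : forall t : nat, (1 <= t <= T)%N ->
     forall s' s'', s' \in St Sr st at_ t -> s'' \in St Sr st at_ t ->
     forall th : 'cV[R]_d, norm2 th <= Ltheta ->
       kappa <= pt Sr phi st at_ t s' th * pt Sr phi st at_ t s'' th)
  (* (A3) *)
  (hA3 : forall s a, exists2 s', s' \in Sr s a & phi s a s' = 0)
  (* trajectory: next state lies in the reachable set *)
  (htraj : forall t : nat, st t.+1 \in St Sr st at_ t)
  (* estimator *)
  (heta : 0 < eta)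
  (homd : is_omd_seq Sr phi st at_ lam eta Ltheta thhat)
  (hlam : Lphi ^+ 2 <= lam) :
  let logterm := ln (1 + T%:R * (Umax Sr)%:R * Lphi ^+ 2 / (lam * d%:R)) in
  [/\ \sum_(1 <= t < T.+1)
        \big[Num.max/0]_(s' in St Sr st at_ t)
          wnorm2 (invmx (Sigma Sr phi st at_ lam thhat t)) (phit phi st at_ t s')
        <= 2 * d%:R / kappa * logterm,
      \sum_(1 <= t < T.+1) \sum_(s' in St Sr st at_ t)
          pt Sr phi st at_ t s' (thhat t.+1) *
          wnorm2 (invmx (Sigma Sr phi st at_ lam thhat t))
                 (phihat Sr phi st at_ thhat t s')
        <= 2 * d%:R * logterm
    & \sum_(1 <= t < T.+1)
        \big[Num.max/0]_(s' in St Sr st at_ t)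
          wnorm2 (invmx (Sigma Sr phi st at_ lam thhat t))
                 (phihat Sr phi st at_ thhat t s')
        <= 8 * d%:R / kappa * logterm].
Proof.
move=> logterm.
have lam0 : 0 <= lam by apply: le_trans hlam; exact: sqr_ge0.
have [lamp|lamz] := boolP (0 < lam); last first.
  have lz : lam = 0 by apply/eqP; rewrite eq_le lam0 andbT leNgt.
  have phi0 s a s' : phi s a s' = 0.
    apply: dotv_eq0; apply/eqP; rewrite eq_le dotv_ge0 andbT.
    apply: le_trans (dot_phi_le hphi s a s') _; by rewrite -lz.
  have lt0 : logterm = 0 by rewrite /logterm lz mul0r invr0 mulr0 addr0 ln1.
  have wz (M : 'M[R]_d) : wnorm2 M 0 = 0 by rewrite wnorm2E bil0l.
  have phz t s : phit phi st at_ t s = 0 by rewrite /phit phi0.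
  have phhz t s : phihat Sr phi st at_ thhat t s = 0.
    rewrite /phihat phz big1 ?subr0 // => i _; by rewrite phz scaler0.
  rewrite lt0 !mulr0; split.
  - apply: le_trans (_ : \sum_(1 <= t < T.+1) (0:R) <= _); last by rewrite big1.
    apply: ler_sum_nat => t _; apply: bigmax_le => // s _; by rewrite phz wz.
  - rewrite big1 // => t _; rewrite big1 // => s _; by rewrite phhz wz mulr0.
  - apply: le_trans (_ : \sum_(1 <= t < T.+1) (0:R) <= _); last by rewrite big1.
    apply: ler_sum_nat => t _; apply: bigmax_le => // s _; by rewrite phhz wz.
have k0 : 0 < kappa by case/andP: hkappa.
have hk t : (1 <= t <= T)%N -> forall s s', s \in St Sr st at_ t -> s' \in St Sr st at_ t ->
    kappa <= pt Sr phi st at_ t s (thhat t.+1) * pt Sr phi st at_ t s' (thhat t.+1).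
  move=> /andP[t1 tT] s s' hs hs'; apply: hA2 => //; first by rewrite t1.
  exact: (homd.2 t t1).1.
have h0 t : exists2 s0, s0 \in St Sr st at_ t & phit phi st at_ t s0 = 0.
  by have [s0 hs0 e] := hA3 (st t) (at_ t); exists s0.
have hsum := sumW thhat htraj hphi lamp hlam T.
rewrite -/logterm in hsum.
split.
- apply: le_trans (_ : \sum_(1 <= t < T.+1) Wt Sr phi st at_ lam thhat t / kappa <= _).
    apply: ler_sum_nat => t /andP[t1 tT].
    have htT : (1 <= t <= T)%N by rewrite t1 -ltnS.
    exact: (max1_le htraj lamp t1 k0 (hk t htT) (h0 t)).
  rewrite -mulr_suml.
  apply: le_trans (_ : (2 * (d%:R * logterm)) / kappa <= _).
    by apply: ler_wpM2r => //; rewrite invr_ge0 ltW.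
  by rewrite le_eqVlt; apply/orP; left; apply/eqP; field; rewrite gt_eqF.
- by rewrite -mulrA.
- apply: le_trans (_ : \sum_(1 <= t < T.+1) 4 * (Wt Sr phi st at_ lam thhat t / kappa) <= _).
    apply: ler_sum_nat => t /andP[t1 tT].
    have htT : (1 <= t <= T)%N by rewrite t1 -ltnS.
    exact: (max3_le htraj lamp t1 k0 (hk t htT) (h0 t)).
  rewrite -mulr_sumr -mulr_suml.
  apply: le_trans (_ : 4 * ((2 * (d%:R * logterm)) / kappa) <= _).
    by apply: ler_wpM2l => //; apply: ler_wpM2r => //; rewrite invr_ge0 ltW.
  by rewrite le_eqVlt; apply/orP; left; apply/eqP; field; rewrite gt_eqF.
Qed.
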